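(* Chooser has a winning strategy in the Picker–Chooser game on the $4\times 4$ torus $4^2$.
   Context: The $4\times 4$ torus game $4^2$ is the hypergraph with vertex set $\mathbb Z_4\times\mathbb Z_4$ and the 16 edges $\{(x,y): y=c\}$, $\{(x,y):x=c\}$, $\{(x,y): x-y=c\}$, $\{(x,y):x+y=c\}$ for $c\in\mathbb Z_4$. In the Picker–Chooser game, in each round Picker selects a pair of untaken vertices and Chooser keeps one of them and gives the other to Picker, until all 16 vertices are taken; Picker plays as Maker (wins by owning all vertices of some edge) and Chooser plays as Breaker (wins by owning at least one vertex of every edge). *)

(* Defs.v *)
From HB Require Import structures.
From mathcomp Require Import all_boot all_order all_algebra.
Set Implicit Arguments. Unset Strict Implicit. Unset Printing Implicit Defensive.
Import GRing.Theory.
Local Open Scope ring_scope.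

Definition vtx := ('Z_4 * 'Z_4)%type.

Definition row_edge (c : 'Z_4) : {set vtx} := [set p : vtx | p.2 == c].
Definition col_edge (c : 'Z_4) : {set vtx} := [set p : vtx | p.1 == c].
Definition diag_edge (c : 'Z_4) : {set vtx} := [set p : vtx | p.1 - p.2 == c].
Definition adiag_edge (c : 'Z_4) : {set vtx} := [set p : vtx | p.1 + p.2 == c].

Definition torus_edges : {set {set vtx}} :=
  [set row_edge c | c in 'Z_4] :|: [set col_edge c | c in 'Z_4]
  :|: [set diag_edge c | c in 'Z_4] :|: [set adiag_edge c | c in 'Z_4].

(** A position is given by Picker's set [P] and Chooser's set [C].
    [chooser_wins P C] : from position (P, C), with Picker to move,
    Chooser has a winning strategy (Chooser plays as Breaker: at the end,
    when every vertex is taken, Chooser owns a vertex of every edge). *)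
Inductive chooser_wins (P C : {set vtx}) : Prop :=
| cw_end :
    (forall v : vtx, v \in P :|: C) ->
    (forall e, e \in torus_edges -> exists2 v, v \in e & v \in C) ->
    chooser_wins P C
| cw_step :
    (exists x y : vtx, [/\ x \notin P :|: C, y \notin P :|: C & x != y]) ->
    (forall x y : vtx, x \notin P :|: C -> y \notin P :|: C -> x != y ->
        chooser_wins (y |: P) (x |: C) \/ chooser_wins (x |: P) (y |: C)) ->
    chooser_wins P C.

(* Main.v *)
Require Import Defs.
From mathcomp Require Import all_boot all_order all_algebra.

Definition edges : seq (seq nat) := [:: [:: 0; 4; 8; 12]; [:: 0; 1; 2; 3]; [:: 0; 5; 10; 15]; [:: 0; 13; 10; 7]; [:: 1; 5; 9; 13]; [:: 4; 5; 6; 7]; [:: 4; 9; 14; 3]; [:: 4; 1; 14; 11]; [:: 2; 6; 10; 14]; [:: 8; 9; 10; 11]; [:: 8; 13; 2; 7]; [:: 8; 5; 2; 15]; [:: 3; 7; 11; 15]; [:: 12; 13; 14; 15]; [:: 12; 1; 6; 11]; [:: 12; 9; 6; 3]].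
Definition incs : seq (seq bool) := [:: [:: true; true; true; true; false; false; false; false; false; false; false; false; false; false; false; false]; [:: false; true; false; false; true; false; false; true; false; false; false; false; false; false; true; false]; [:: false; true; false; false; false; false; false; false; true; false; true; true; false; false; false; false]; [:: false; true; false; false; false; false; true; false; false; false; false; false; true; false; false; true]; [:: true; false; false; false; false; true; true; true; false; false; false; false; false; false; false; false]; [:: false; false; true; false; true; true; false; false; false; false; false; true; false; false; false; false]; [:: false; false; false; false; false; true; false; false; true; false; false; false; false; false; true; true]; [:: false; false; false; true; false; true; false; false; false; false; true; false; true; false; false; false]; [:: true; false; false; false; false; false; false; false; false; true; true; true; false; false; false; false]; [:: false; false; false; false; true; false; true; false; false; true; false; false; false; false; false; true]; [:: false; false; true; true; false; false; false; false; true; true; false; false; false; false; false; false]; [:: false; false; false; false; false; false; false; true; false; true; false; false; true; false; true; false]; [:: true; false; false; false; false; false; false; false; false; false; false; false; false; true; true; true]; [:: false; false; false; true; true; false; false; false; false; false; true; false; false; true; false; false]; [:: false; false; false; false; false; false; true; true; true; false; false; false; false; true; false; false]; [:: false; false; true; false; false; false; false; false; false; false; false; true; true; true; false; false]].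
Definition incm i := nth [::] incs i.
Fixpoint newtsM (mi mj : seq bool) (ts : seq nat) : seq nat :=
  match mi, mj, ts with
  | a :: mi', b :: mj', t :: ts' => (if a then 0 else if b then t.*2 else t) :: newtsM mi' mj' ts'
  | _, _, _ => [::] end.
Fixpoint sums (mi mj : seq bool) (ts : seq nat) : nat * nat :=
  match mi, mj, ts with
  | a :: mi', b :: mj', t :: ts' => let (u, v) := sums mi' mj' ts' in
       ((if a then 0 else if b then t.*2 else t) + u, (if b then 0 else if a then t.*2 else t) + v)
  | _, _, _ => (0, 0) end.
Definition rm2 (i j : nat) (fr : seq nat) := [seq k <- fr | (k != i) && (k != j)].
Fixpoint allpairs (ok : nat -> nat -> bool) (s : seq nat) : bool :=
  match s with i :: r => if all (ok i) r then allpairs ok r else false | [::] => true end.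
Definition okpair (chk : seq nat -> seq nat -> bool) (fr ts : seq nat) (i j : nat) : bool :=
      let mi := incm i in let mj := incm j in
      let (sA, sB) := sums mi mj ts in
      if sA < 16 then true else if sB < 16 then true else
      if sA <= sB then (if chk (rm2 i j fr) (newtsM mi mj ts) then true else chk (rm2 i j fr) (newtsM mj mi ts))
      else (if chk (rm2 i j fr) (newtsM mj mi ts) then true else chk (rm2 i j fr) (newtsM mi mj ts)).
Fixpoint chk (fuel : nat) (fr ts : seq nat) : bool :=
  if sumn ts < 16 then true else
  match fuel with 0 => false | S f =>
    if 1 < size fr then allpairs (okpair (chk f) fr ts) fr else false end.


Definition upd (f : nat -> bool) (i : nat) : nat -> bool := fun k => (k == i) || f k.
Definition term (p c : nat -> bool) (e : seq nat) : nat :=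
  if has c e then 0 else 2 ^ count p e.
Definition tsof p c := map (term p c) edges.
Definition freel (p c : nat -> bool) := [seq k <- iota 0 16 | ~~ p k && ~~ c k].
Definition code (v : vtx) : nat := 4 * nat_of_ord v.1 + nat_of_ord v.2.
Definition decode (i : nat) : vtx := (inZp (i %/ 4), inZp (i %% 4)).
Definition dec (f : nat -> bool) : {set vtx} := [set v | f (code v)].

From mathcomp Require Import zify.
Lemma code_lt v : code v < 16.
Proof. case: v => a b; rewrite /code /=; have ha : nat_of_ord a < 4 := ltn_ord a; have hb : nat_of_ord b < 4 := ltn_ord b; lia. Qed.
Lemma code_inj : injective code.
Proof.
move=> [a b] [a' b']; rewrite /code /= => H.
have h1 : nat_of_ord a < 4 := ltn_ord a. have h2 : nat_of_ord b < 4 := ltn_ord b.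
have h3 : nat_of_ord a' < 4 := ltn_ord a'. have h4 : nat_of_ord b' < 4 := ltn_ord b'.
have E1 : nat_of_ord a = a' by lia.
have E2 : nat_of_ord b = b' by lia.
by congr pair; apply: val_inj.
Qed.
Lemma codeK {i} : i < 16 -> code (decode i) = i.
Proof. by do 16?[case: i => [|i] //]. Qed.
Lemma incmE {i} : i < 16 -> incm i = [seq i \in e | e <- edges].
Proof. by do 16?[case: i => [|i] //]. Qed.
Lemma edges_ok : all (fun e => uniq e && all (fun k => k < 16) e && (size e == 4)) edges.
Proof. by []. Qed.
Lemma cover_all (c : 'Z_4) :
  [&& has (fun L => all (fun k => (decode k).2 == c) L) edges,
      has (fun L => all (fun k => (decode k).1 == c) L) edges,
      has (fun L => all (fun k => ((decode k).1 - (decode k).2)%R == c) L) edges &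
      has (fun L => all (fun k => ((decode k).1 + (decode k).2)%R == c) L) edges].
Proof. case: c => [[|[|[|[|m]]]] Hc] //; vm_compute; reflexivity. Qed.

Lemma newtsM_map (a b : nat) (es : seq (seq nat)) (f : seq nat -> nat) :
  newtsM [seq a \in e | e <- es] [seq b \in e | e <- es] (map f es)
  = map (fun e => if a \in e then 0 else if b \in e then (f e).*2 else f e) es.
Proof. by elim: es => //= e es ->. Qed.

Lemma sumsE mi mj ts : sums mi mj ts = (sumn (newtsM mi mj ts), sumn (newtsM mj mi ts)).
Proof.
elim: ts mi mj => [|t ts IH] [|a mi] [|b mj] //=.
by rewrite IH.
Qed.

Lemma pot_ineq mi mj ts : sumn (newtsM mi mj ts) + sumn (newtsM mj mi ts) <= (sumn ts).*2.
Proof.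
elim: ts mi mj => [|t ts IH] [|a mi] [|b mj] //=; try by rewrite leq0n.
have := IH mi mj; rewrite doubleD.
case: a; case: b => /=; rewrite -!addnn; lia.
Qed.

Lemma has_upd f a (e : seq nat) : has (upd f a) e = (a \in e) || has f e.
Proof.
elim: e => //= k e IH; rewrite IH in_cons /upd eq_sym.
by case: (a == k); case: (f k); case: (a \in e); case: (has f e).
Qed.

Lemma count_upd f b (e : seq nat) : ~~ f b -> uniq e -> count (upd f b) e = count f e + (b \in e).
Proof.
move=> fb; elim: e => //= k e IH /andP [ke ue]; rewrite IH // in_cons /upd.
case: (eqVneq k b) => [Ekb|kb] /=.
  by rewrite Ekb in ke *; rewrite (negbTE fb) (negbTE ke) /= addn0 add0n addnC.
by rewrite addnA.
Qed.

Lemma term_upd p c a b e : ~~ p b -> uniq e ->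
  term (upd p b) (upd c a) e = if a \in e then 0 else if b \in e then (term p c e).*2 else term p c e.
Proof.
move=> pb ue; rewrite /term has_upd count_upd //.
case: (a \in e) => //=; case: (has c e) => //=; case: (b \in e) => //=.
  by rewrite addn1 expnS mul2n.
by rewrite addn0.
Qed.

Lemma mem_freel p c k : (k \in freel p c) = [&& k < 16, ~~ p k & ~~ c k].
Proof. by rewrite /freel mem_filter mem_iota /= andbC. Qed.

Lemma uniq_freel p c : uniq (freel p c).
Proof. by rewrite filter_uniq // iota_uniq. Qed.

Lemma tsof_upd p c a b : a < 16 -> b < 16 -> ~~ p b ->
  tsof (upd p b) (upd c a) = newtsM (incm a) (incm b) (tsof p c).
Proof.
move=> ha hb pb; rewrite (incmE ha) (incmE hb) /tsof newtsM_map.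
apply/eq_in_map => e He; apply: term_upd => //.
by have /allP/(_ e He)/andP[/andP[]] := edges_ok.
Qed.

Lemma freel_upd p c a b : freel (upd p b) (upd c a) = rm2 a b (freel p c).
Proof.
rewrite /rm2 /freel -filter_predI; apply: eq_filter => k /=; rewrite /upd.
by case: (k == a); case: (k == b); case: (p k); case: (c k).
Qed.

Lemma size_rm2 a b (s : seq nat) : uniq s -> a \in s -> b \in s -> a != b ->
  size (rm2 a b s) = (size s).-2.
Proof.
move=> us Ha Hb ab.
have H1 := count_predUI (pred1 a) (pred1 b) s.
rewrite !(count_uniq_mem _ us) Ha Hb in H1.
have H0 : count (predI (pred1 a) (pred1 b)) s = 0.
  rewrite (eq_count (a2 := pred0)) ?count_pred0 // => x /=.
  by case: (eqVneq x a) => // ->; rewrite (negbTE ab).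
rewrite H0 addn0 in H1.
have H2 := count_predC (predU (pred1 a) (pred1 b)) s.
rewrite H1 in H2.
rewrite /rm2 size_filter (eq_count (a2 := predC (predU (pred1 a) (pred1 b)))); last first.
  by move=> x /=; rewrite negb_or.
by rewrite -H2.
Qed.

Lemma dec_upd f y : dec (upd f (code y)) = y |: dec f.
Proof.
apply/setP => v; rewrite !inE /upd; congr (_ || _).
by apply/eqP/eqP => [/code_inj|->].
Qed.

Lemma my_sumn_ge (A : eqType) (f : A -> nat) s x : x \in s -> f x <= sumn (map f s).
Proof.
elim: s => //= y s IH; rewrite in_cons => /orP [/eqP ->|/IH]; first exact: leq_addr.
by move=> H; apply: (leq_trans H); exact: leq_addl.
Qed.

Lemma edge_facts {L} : L \in edges -> [/\ uniq L, all (fun k => k < 16) L & size L = 4].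
Proof. by move=> HL; have /allP/(_ L HL)/andP[/andP[-> ->] /eqP->] := edges_ok. Qed.

Lemma cover_lem c (E : {set vtx}) (P : vtx -> bool) :
  (forall v, (v \in E) = P v) -> has (fun L => all (fun k => P (decode k)) L) edges ->
  (forall L, L \in edges -> has c L) -> exists2 v, v \in E & v \in dec c.
Proof.
move=> HE /hasP [L HL /allP AL] Hall.
have /hasP [k kL ck] := Hall L HL.
have [_ /allP lt _] := edge_facts HL.
exists (decode k); first by rewrite HE; exact: AL.
by rewrite inE codeK ?lt.
Qed.

Lemma endcase p c : freel p c = [::] -> sumn (tsof p c) < 16 -> chooser_wins (dec p) (dec c).
Proof.
move=> Hf hphi; apply: cw_end.
  move=> v; rewrite in_setU !inE; have := code_lt v.
  case E: (p (code v)) => //; case F: (c (code v)) => // h.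
  have : code v \in freel p c by rewrite mem_freel h E F.
  by rewrite Hf.
have Hall : forall L, L \in edges -> has c L.
  move=> L HL; apply/negPn/negP => hc.
  have [uL /allP ltL sL] := edge_facts HL.
  have Hp : count p L = 4.
    rewrite -sL; apply/eqP; rewrite -all_count; apply/allP => k kL.
    have hk := ltL k kL.
    have ck : ~~ c k by apply: contra hc => ck; apply/hasP; exists k.
    case pk: (p k) => //.
    have : k \in freel p c by rewrite mem_freel hk pk ck.
    by rewrite Hf.
  have := @my_sumn_ge _ (term p c) _ _ HL; rewrite /term (negbTE hc) Hp.
  by rewrite /tsof in hphi => h; have := leq_ltn_trans h hphi.
move=> e; rewrite !in_setU => /orP[/orP[/orP[]|]|] /imsetP[c0 _ ->];
  have /and4P[h1 h2 h3 h4] := cover_all c0.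
- by apply: (@cover_lem c _ (fun v => v.2 == c0)) => // v; rewrite inE.
- by apply: (@cover_lem c _ (fun v => v.1 == c0)) => // v; rewrite inE.
- by apply: (@cover_lem c _ (fun v => (v.1 - v.2)%R == c0)) => // v; rewrite inE.
- by apply: (@cover_lem c _ (fun v => (v.1 + v.2)%R == c0)) => // v; rewrite inE.
Qed.

Lemma notin_dec {p c k} : k \in freel p c -> decode k \notin dec p :|: dec c.
Proof.
by rewrite mem_freel => /and3P[hk pk ck]; rewrite in_setU !inE codeK // (negbTE pk) (negbTE ck).
Qed.

Lemma in_free {p c v} : v \notin dec p :|: dec c -> code v \in freel p c.
Proof.
rewrite in_setU !inE negb_or => /andP[pv cv].
by rewrite mem_freel code_lt pv cv.
Qed.

Lemma step_lemma p c : 1 < size (freel p c) ->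
  (forall i j, i \in freel p c -> j \in freel p c -> i != j ->
     chooser_wins (dec (upd p j)) (dec (upd c i)) \/ chooser_wins (dec (upd p i)) (dec (upd c j))) ->
  chooser_wins (dec p) (dec c).
Proof.
move=> hs H; apply: cw_step.
  have u := uniq_freel p c.
  case E: (freel p c) hs u => [|a [|b r]] // _ /= /andP[].
  rewrite in_cons negb_or => /andP[ab _] _.
  have ha : a \in freel p c by rewrite E mem_head.
  have hb : b \in freel p c by rewrite E !in_cons eqxx orbT.
  exists (decode a), (decode b); split; try exact: notin_dec.
  apply/eqP => /(congr1 code).
  move: ha hb; rewrite !mem_freel => /andP[ha _] /andP[hb _].
  by rewrite !codeK // => Eab; rewrite Eab eqxx in ab.
move=> x y hx hy xy.
have := H _ _ (in_free hx) (in_free hy).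
rewrite !dec_upd; apply.
by apply: contra xy => /eqP /code_inj ->.
Qed.

Lemma child {p c a b} : a \in freel p c -> b \in freel p c -> a != b ->
  [/\ tsof (upd p b) (upd c a) = newtsM (incm a) (incm b) (tsof p c),
      freel (upd p b) (upd c a) = rm2 a b (freel p c) &
      size (freel (upd p b) (upd c a)) = (size (freel p c)).-2].
Proof.
move=> ha hb ab; have ha' := ha; have hb' := hb.
rewrite !mem_freel in ha' hb'; case/and3P: ha' => ha1 ha2 ha3; case/and3P: hb' => hb1 hb2 hb3.
split; first exact: tsof_upd.
  exact: freel_upd.
by rewrite freel_upd size_rm2 // uniq_freel.
Qed.

Lemma pot n : forall p c, size (freel p c) <= n -> ~~ odd (size (freel p c)) ->
  sumn (tsof p c) < 16 -> chooser_wins (dec p) (dec c).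
Proof.
elim: n => [|n IH] p c hs hodd hphi.
  by apply: endcase => //; apply/size0nil; move: hs; rewrite leqn0 => /eqP.
case E: (size (freel p c)) hs hodd => [|[|k]] hs hodd.
- by apply: endcase => //; apply/size0nil.
- by [].
apply: step_lemma; first by rewrite E.
move=> i j hi hj ij.
have [tA fA sA] := child hi hj ij.
have ji : j != i by rewrite eq_sym.
have [tB fB sB] := child hj hi ji.
have := pot_ineq (incm i) (incm j) (tsof p c).
rewrite -tA -tB => hsum.
have hpar : forall p' c', size (freel p' c') = (size (freel p c)).-2 ->
    sumn (tsof p' c') < 16 -> chooser_wins (dec p') (dec c').
  move=> p' c' hs' hphi'; apply: IH => //; rewrite hs' E /=.
    by move: hs; rewrite ltnS; apply: leq_trans.
  by move: hodd; rewrite /= negbK.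
case: (ltnP (sumn (tsof (upd p j) (upd c i))) 16) => h.
  by left; apply: hpar.
right; apply: hpar => //.
rewrite -!addnn in hsum; lia.
Qed.

Lemma allpairsP {ok : nat -> nat -> bool} {s} : allpairs ok s ->
  forall i j, i \in s -> j \in s -> i != j -> ok i j || ok j i.
Proof.
elim: s => //= k r IH; case A: (all (ok k) r) => // /IH {}IH i j.
rewrite !in_cons.
case: (eqVneq i k) => [->|ik] /=.
  move=> _ hj jk; move/allP: A => /(_ j); rewrite eq_sym in jk; move: hj; rewrite (negbTE jk) /= => hj.
  by move=> /(_ hj) ->.
case: (eqVneq j k) => [->|jk] /=.
  by move=> hi _ _; move/allP: A => /(_ i hi) ->; rewrite orbT.
exact: IH.
Qed.

Lemma okpairE ch fr ts a b : okpair ch fr ts a b ->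
  (sumn (newtsM (incm a) (incm b) ts) < 16 \/ ch (rm2 a b fr) (newtsM (incm a) (incm b) ts)) \/
  (sumn (newtsM (incm b) (incm a) ts) < 16 \/ ch (rm2 a b fr) (newtsM (incm b) (incm a) ts)).
Proof.
rewrite /okpair sumsE.
case: ifP => [h _|_]; first by left; left.
case: ifP => [h _|_]; first by right; left.
case: ifP => _.
  by case: ifP => [h _|_ h]; [left; right | right; right].
by case: ifP => [h _|_ h]; [right; right | left; right].
Qed.

Lemma sound f : forall p c, ~~ odd (size (freel p c)) ->
  sumn (tsof p c) < 16 \/ chk f (freel p c) (tsof p c) -> chooser_wins (dec p) (dec c).
Proof.
elim: f => [|f IH] p c hodd H.
  case: H => [hphi|hchk]; first exact: (pot _ _ _ (leqnn _) hodd hphi).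
  by move: hchk => /=; case: ifP => // h _; exact: (pot _ _ _ (leqnn _) hodd h).
case: H => [hphi|hchk]; first exact: (pot _ _ _ (leqnn _) hodd hphi).
move: hchk => /=; case: ifP => [h _|_]; first exact: (pot _ _ _ (leqnn _) hodd h).
case: ifP => // hs hall.
have CW : forall a b, a \in freel p c -> b \in freel p c -> a != b ->
   (sumn (newtsM (incm a) (incm b) (tsof p c)) < 16 \/
    chk f (rm2 a b (freel p c)) (newtsM (incm a) (incm b) (tsof p c))) ->
   chooser_wins (dec (upd p b)) (dec (upd c a)).
  move=> a b ha hb ab H.
  have [tA fA sA] := child ha hb ab.
  apply: IH; last by rewrite tA fA.
  rewrite sA; move: hodd hs; case: (size (freel p c)) => [|[|k]] //=.
  by rewrite negbK.
have rmC : forall a b, rm2 a b (freel p c) = rm2 b a (freel p c).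
  by move=> a b; apply: eq_filter => k; rewrite andbC.
apply: step_lemma => // i j hi hj ij.
have ji : j != i by rewrite eq_sym.
case/orP: (allpairsP hall _ _ hi hj ij) => /okpairE [H|H].
- by left; apply: CW.
- by right; apply: CW => //; rewrite -rmC.
- by right; apply: CW.
- by left; apply: CW => //; rewrite -rmC.
Qed.

Lemma chk_ok : chk 8 (iota 0 16) (nseq 16 1) = true.
Proof. vm_compute. reflexivity. Qed.

Theorem proposition11 : chooser_wins set0 set0.
Proof.
have E : dec (fun _ => false) = set0 by apply/setP => v; rewrite !inE.
rewrite -E; apply: (@sound 8); first by [].
by right; rewrite chk_ok.
Qed.
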